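(* Let $t,w,w',n,g$ be positive integers with $t\le w\le w'$. Suppose that there exists a $t$-resolvable Steiner system $\mathrm{S}(w,w',n)$. If there exists an $\mathrm{LGMHP}^*(t,w,w',g)$, then there exists an $\mathrm{LGMHP}^*(t,w,n,g)$.
   Context: A Steiner system $\mathrm{S}(s,k,n)$ is a pair $(X,\mathcal{B})$ with $|X|=n$ and $\mathcal{B}$ a family of $k$-subsets (blocks) of $X$ such that every $s$-subset of $X$ lies in exactly one block. An $\mathrm{S}(w,w',n)$ $(X,\mathcal{B})$ is $t$-resolvable if $\mathcal{B}$ can be partitioned into block sets of $\mathrm{S}(t,w',n)$'s on $X$. For a set $Y$ of size $m$, let $X=Y\times[g]$ with groups $\{y\}\times[g]$. An H-packing $\mathrm{HP}(m,g,w,t)$ is a family of $w$-subsets (blocks) of $X$, each meeting every group in at most one point, such that every $t$-subset of $X$ with points in $t$ distinct groups lies in at most one block. A block $\{(y_1,a_1),\dots,(y_w,a_w)\}$ is identified with the word indexed by $Y$ over $\{0\}\cup[g]$ with entry $a_s$ at coordinate $y_s$ and $0$ elsewhere. A $\mathrm{GMHP}^*(t,w,m,g)$ is an $\mathrm{HP}(m,g,w,t)$ in which any two distinct blocks have Hamming distance at least $2(w-t+1)$ and which has exactly $g^{t-1}\binom{m}{t}/\binom{w}{t}$ blocks. An $\mathrm{LGMHP}^*(t,w,m,g)$ is a partition of the set of all $w$-subsets of $Y\times[g]$ meeting each group in at most one point into block sets of $\mathrm{GMHP}^*(t,w,m,g)$'s. *)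

(* Defs.v *)
From mathcomp Require Import all_boot.
Set Implicit Arguments. Unset Strict Implicit. Unset Printing Implicit Defensive.

Definition steiner_system (s k n : nat) (B : {set {set 'I_n}}) : Prop :=
  (forall b, b \in B -> #|b| = k) /\
  (forall S : {set 'I_n}, #|S| = s -> #|[set b in B | S \subset b]| = 1).

Definition t_resolvable_steiner_exists (t w w' n : nat) : Prop :=
  exists B : {set {set 'I_n}}, @steiner_system w w' n B /\
    exists P : {set {set {set 'I_n}}},
      partition P B /\ forall C, C \in P -> @steiner_system t w' n C.

(* Points of X = Y x [g] with Y = 'I_m, [g] = 'I_g; the group of p is p.1. *)
Definition meets_groups_once (m g : nat) (b : {set 'I_m * 'I_g}) : bool :=
  [forall y : 'I_m, #|[set p in b | p.1 == y]| <= 1].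

(* The word of a block: coordinate y carries a if (y,a) is in b, 0 (None) else. *)
Definition word (m g : nat) (b : {set 'I_m * 'I_g}) (y : 'I_m) : option 'I_g :=
  [pick a | (y, a) \in b].

Definition hamming (m g : nat) (b1 b2 : {set 'I_m * 'I_g}) : nat :=
  #|[set y : 'I_m | word b1 y != word b2 y]|.

Definition HP (m g w t : nat) (B : {set {set 'I_m * 'I_g}}) : Prop :=
  (forall b, b \in B -> #|b| = w /\ meets_groups_once b) /\
  (forall T : {set 'I_m * 'I_g}, #|T| = t -> #|[set p.1 | p in T]| = t ->
      #|[set b in B | T \subset b]| <= 1).

(* GMHP*(t,w,m,g); the block count g^(t-1) C(m,t)/C(w,t) is stated
   multiplicatively (C(w,t) > 0 since t <= w). *)
Definition GMHP (t w m g : nat) (B : {set {set 'I_m * 'I_g}}) : Prop :=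
  @HP m g w t B /\
  (forall b1 b2, b1 \in B -> b2 \in B -> b1 != b2 ->
      2 * (w - t + 1) <= hamming b1 b2) /\
  #|B| * 'C(w, t) = g ^ (t - 1) * 'C(m, t).

Definition all_words (w m g : nat) : {set {set 'I_m * 'I_g}} :=
  [set b : {set 'I_m * 'I_g} | (#|b| == w) && meets_groups_once b].

Definition LGMHP_exists (t w m g : nat) : Prop :=
  exists P : {set {set {set 'I_m * 'I_g}}},
    partition P (all_words w m g) /\ forall B, B \in P -> @GMHP t w m g B.

(* Main.v *)
Require Import Defs.
From mathcomp Require Import all_boot zify.
Set Implicit Arguments. Unset Strict Implicit. Unset Printing Implicit Defensive.

Definition supp (m g : nat) (y : {set 'I_m * 'I_g}) : {set 'I_m} := [set p.1 | p in y].

Lemma mgoP m g (y : {set 'I_m * 'I_g}) :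
  reflect {in y &, forall p q, p.1 = q.1 -> p = q} (meets_groups_once y).
Proof.
apply: (iffP forallP) => [H p q py qy e | H u].
- have /card_le1_eqP H1 := H p.1.
  by apply: H1; rewrite inE ?py ?qy ?e /=.
- apply/card_le1_eqP => p q; rewrite !inE => /andP[py /eqP e1] /andP[qy /eqP e2].
  by apply: H => //; rewrite e1 e2.
Qed.

Lemma card_supp m g (y : {set 'I_m * 'I_g}) : meets_groups_once y -> #|supp y| = #|y|.
Proof. by move/mgoP=> H; rewrite card_in_imset. Qed.

Lemma wordN m g (y : {set 'I_m * 'I_g}) u : (word y u == None) = (u \notin supp y).
Proof.
rewrite /word; case: pickP => [a ua | none] /=.
  by have -> : u \in supp y by apply/imsetP; exists (u, a).
apply/esym/negP => /imsetP [p py pe].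
by have := none p.2; rewrite pe -surjective_pairing py.
Qed.

Definition phi (n w' : nat) (d : 'I_n) (b : {set 'I_n}) (k : 'I_w') : 'I_n :=
  nth d (enum b) k.
Definition phi2 (n w' g : nat) (d : 'I_n) (b : {set 'I_n}) (p : 'I_w' * 'I_g) :
  'I_n * 'I_g := (phi d b p.1, p.2).
Definition pull (n w' g : nat) (d : 'I_n) (b : {set 'I_n}) (y : {set 'I_n * 'I_g}) :
  {set 'I_w' * 'I_g} := @phi2 n w' g d b @^-1: y.
Definition push (n w' g : nat) (d : 'I_n) (b : {set 'I_n}) (q : {set 'I_w' * 'I_g}) :
  {set 'I_n * 'I_g} := @phi2 n w' g d b @: q.

Arguments phi {n w'} d b k.
Arguments phi2 {n w' g} d b p.
Arguments pull {n w' g} d b y.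
Arguments push {n w' g} d b q.

Section S.
Variables (n w' g : nat) (d : 'I_n) (b : {set 'I_n}).
Hypothesis hb : #|b| = w'.

Lemma size_enum_b : size (enum b) = w'.
Proof. by rewrite -cardE hb. Qed.

Lemma phi_inj : injective (@phi n w' d b).
Proof.
move=> k1 k2 /eqP; rewrite /phi nth_uniq ?size_enum_b ?enum_uniq //.
by move/eqP/val_inj.
Qed.

Lemma phi_mem k : @phi n w' d b k \in b.
Proof. by rewrite /phi -mem_enum mem_nth // size_enum_b. Qed.

Lemma phi_surj u : u \in b -> exists k : 'I_w', phi d b k = u.
Proof.
move=> ub; have hi : index u (enum b) < w' by rewrite -size_enum_b index_mem mem_enum.
by exists (Ordinal hi); rewrite /phi nth_index // mem_enum.
Qed.

Lemma phi2_inj : injective (@phi2 n w' g d b).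
Proof.
move=> [k1 a1] [k2 a2] [/phi_inj -> ->] //.
Qed.

Lemma pullK (q : {set 'I_w' * 'I_g}) : pull d b (@push n w' g d b q) = q.
Proof. by apply/setP => p; rewrite inE mem_imset //; apply: phi2_inj. Qed.

Lemma pushK (y : {set 'I_n * 'I_g}) : supp y \subset b -> push d b (@pull n w' g d b y) = y.
Proof.
move=> sy; apply/setP => p; apply/imsetP/idP => [[q qy ->] | py].
  by rewrite inE in qy.
have /phi_surj [k kp] : p.1 \in b by apply: (subsetP sy); apply: imset_f.
exists (k, p.2); first by rewrite inE /phi2 /= kp -surjective_pairing.
by rewrite /phi2 /= kp -surjective_pairing.
Qed.

Lemma card_push (q : {set 'I_w' * 'I_g}) : #|@push n w' g d b q| = #|q|.
Proof. by rewrite card_imset //; apply: phi2_inj. Qed.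

Lemma supp_push (q : {set 'I_w' * 'I_g}) : supp (@push n w' g d b q) = phi d b @: supp q.
Proof. by rewrite /supp /push -!imset_comp. Qed.

Lemma supp_push_sub (q : {set 'I_w' * 'I_g}) : supp (@push n w' g d b q) \subset b.
Proof. by rewrite supp_push; apply/subsetP => u /imsetP [k _ ->]; apply: phi_mem. Qed.

Lemma mgo_push (q : {set 'I_w' * 'I_g}) : meets_groups_once q -> meets_groups_once (@push n w' g d b q).
Proof.
move/mgoP => H; apply/mgoP => p1 p2 /imsetP [q1 q1q ->] /imsetP [q2 q2q ->] /= e.
by rewrite (H q1 q2) // (phi_inj e).
Qed.

Lemma mgo_pull (y : {set 'I_n * 'I_g}) : meets_groups_once y -> meets_groups_once (@pull n w' g d b y).
Proof.
move/mgoP => H; apply/mgoP => p1 p2; rewrite !inE => h1 h2 e.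
apply: phi2_inj; apply: H => //=; by rewrite e.
Qed.

Lemma word_pull (y : {set 'I_n * 'I_g}) k : word (@pull n w' g d b y) k = word y (phi d b k).
Proof. by rewrite /word; apply: eq_pick => a; rewrite inE. Qed.

End S.

Lemma card1_uniq (T : finType) (C : {set {set T}}) (U : {set T}) b1 b2 :
  #|[set b in C | U \subset b]| = 1 -> b1 \in C -> b2 \in C ->
  U \subset b1 -> U \subset b2 -> b1 = b2.
Proof.
move=> E h1 h2 s1 s2.
have /card_le1_eqP H : #|[set b in C | U \subset b]| <= 1 by rewrite E.
by apply: H; rewrite inE ?h1 ?h2 ?s1 ?s2.
Qed.

Lemma card1_ex (T : finType) (C : {set {set T}}) (U : {set T}) :
  #|[set b in C | U \subset b]| = 1 -> exists2 b, b \in C & U \subset b.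
Proof.
move=> E; have : 0 < #|[set b in C | U \subset b]| by rewrite E.
by case/card_gt0P => b; rewrite inE => /andP [] ; exists b.
Qed.

Lemma ex_subset (T : finType) (A : {set T}) k : k <= #|A| ->
  exists U : {set T}, U \subset A /\ #|U| = k.
Proof.
move=> kA; have : 0 < #|[set U : {set T} | U \subset A & #|U| == k]|.
  by rewrite cards_draws bin_gt0.
by case/card_gt0P => U; rewrite inE => /andP [sU /eqP cU]; exists U.
Qed.

Lemma sum_ind (T : finType) (P : pred T) :
  \sum_(i : T) (P i : nat) = #|[set i | P i]|.
Proof. by rewrite -sum1dep_card [RHS]big_mkcond /=; apply: eq_bigr => i _; case: (P i). Qed.

Lemma sum_ind_in (T : finType) (A : {set T}) (P : pred T) :
  \sum_(i in A) (P i : nat) = #|[set i in A | P i]|.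
Proof.
rewrite big_mkcond (eq_bigr (fun i => ((i \in A) && P i : nat))).
  by rewrite sum_ind.
by move=> i _; case: (i \in A).
Qed.

Lemma steiner_count t k n (C : {set {set 'I_n}}) :
  steiner_system t k C -> #|C| * 'C(k, t) = 'C(n, t).
Proof.
move=> [C1 C2].
have E1 : \sum_(b in C) \sum_(U : {set 'I_n}) ((U \subset b) && (#|U| == t) : nat)
          = #|C| * 'C(k, t).
  transitivity (\sum_(b in C) 'C(k, t)); last first.
    by rewrite sum_nat_const.
  apply: eq_bigr => b bC.
  by rewrite -(C1 b bC) -cards_draws sum_ind.
rewrite -E1 exchange_big /= -[n in RHS]card_ord -card_draws -sum_ind.
apply: eq_bigr => U _.
case: eqP => cU; last by rewrite big1 // => b _; rewrite andbF.
transitivity #|[set b in C | U \subset b]|; last by rewrite C2.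
rewrite -sum_ind_in; apply: eq_bigr => b _.
by rewrite andbT.
Qed.

Theorem theorem3p9 (t w w' n g : nat) :
  0 < t -> 0 < w -> 0 < w' -> 0 < n -> 0 < g ->
  t <= w -> w <= w' ->
  t_resolvable_steiner_exists t w w' n ->
  LGMHP_exists t w w' g ->
  LGMHP_exists t w n g.
Proof.
move=> t0 w0 w'0 n0 g0 tw ww' [B [[SB1 SB2] [P [partP CP]]]] [QP [partQ GQ]].
pose d : 'I_n := Ordinal n0.
have coverP : cover P = B by apply: cover_partition.
have coverQ : cover QP = all_words w w' g by apply: cover_partition.
have trivP : trivIset P by case/and3P: partP.
have trivQ : trivIset QP by case/and3P: partQ.
pose AW := all_words w n g.
have AWP y : y \in AW -> #|y| = w /\ meets_groups_once y.
  by rewrite inE => /andP[/eqP -> ->].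
have AWsupp y : y \in AW -> #|supp y| = w.
  by move=> /AWP [cy my]; rewrite card_supp.
pose blk (y : {set 'I_n * 'I_g}) := odflt set0 [pick b in B | supp y \subset b].
have blkP y : y \in AW -> [/\ blk y \in B, supp y \subset blk y &
    forall b, b \in B -> supp y \subset b -> b = blk y].
  move=> yA; have E := SB2 _ (AWsupp y yA).
  rewrite /blk; case: pickP => [b /andP[bB sb] | none] /=.
    by split => // b' b'B sb'; apply: (card1_uniq E b'B bB sb' sb).
  by case: (card1_ex E) => b bB sb; have := none b; rewrite bB sb.
have hB b : b \in B -> #|b| = w' by apply: SB1.
have pullAW y b : y \in AW -> b \in B -> supp y \subset b ->
    pull d b y \in all_words w w' g.
  move=> yA bB sb; have [cy my] := AWP y yA.
  rewrite inE -cy -{2}(@pushK n w' g d b (hB b bB) y sb) (@card_push n w' g d b (hB b bB)).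
  apply/andP; split; first exact/eqP.
  exact: (@mgo_pull n w' g d b (hB b bB)).
pose key y := (pblock P (blk y), pblock QP (pull d (blk y) y)).
exists (preim_partition key AW); split; first exact: preim_partitionP.
move=> K /imsetP [x0 x0A defK].
have x0B := blkP x0 x0A.
case: x0B => bx0B sx0 _.
pose C := pblock P (blk x0).
pose Q := pblock QP (pull d (blk x0) x0).
have CinP : C \in P by apply: pblock_mem; rewrite coverP.
have QinQP : Q \in QP by apply: pblock_mem; rewrite coverQ; apply: pullAW.
have CsubB b : b \in C -> b \in B.
  by move=> bC; rewrite -coverP; apply/bigcupP; exists C.
have Kfacts y : y \in K -> [/\ y \in AW, blk y \in C & pull d (blk y) y \in Q].
  rewrite defK inE => /andP [yA /eqP [e1 e2]].
  have [byB syb _] := blkP y yA.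
  split => //.
    by rewrite /C e1 mem_pblock coverP.
  by rewrite /Q e2 mem_pblock coverQ; apply: pullAW.
have Kin y : y \in AW -> blk y \in C -> pull d (blk y) y \in Q -> y \in K.
  move=> yA byC pyQ; have [byB syb _] := blkP y yA.
  rewrite defK inE yA /= /key.
  by rewrite (def_pblock trivP CinP byC) (def_pblock trivQ QinQP pyQ).
have pull_inj y1 y2 : y1 \in AW -> y2 \in AW -> blk y1 = blk y2 ->
    @pull n w' g d (blk y1) y1 = @pull n w' g d (blk y2) y2 -> y1 = y2.
  move=> y1A y2A eb ep.
  have [b1B s1 _] := blkP y1 y1A; have [b2B s2 _] := blkP y2 y2A.
  rewrite -(@pushK n w' g d _ (hB _ b1B) y1 s1) -(@pushK n w' g d _ (hB _ b2B) y2 s2).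
  by rewrite ep eb.
have GC := CP C CinP.
have GQQ := GQ Q QinQP.
have hBC b : b \in C -> #|b| = w' by move=> /CsubB /hB.
split; [split | split].
- by move=> y /Kfacts [/AWP].
- move=> T cT cST; apply/card_le1_eqP => y1 y2; rewrite !inE.
  move=> /andP [y1K sT1] /andP [y2K sT2].
  have [y1A b1C p1Q] := Kfacts y1 y1K; have [y2A b2C p2Q] := Kfacts y2 y2K.
  have [b1B s1 _] := blkP y1 y1A; have [b2B s2 _] := blkP y2 y2A.
  have sU1 : supp T \subset blk y1 by apply: subset_trans s1; apply: imsetS.
  have sU2 : supp T \subset blk y2 by apply: subset_trans s2; apply: imsetS.
  have eb : blk y1 = blk y2 by apply: (card1_uniq (GC.2 _ cST)).
  apply: pull_inj => //.
  set b := blk y1 in sU1 p1Q eb *.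
  have hb := hBC b b1C.
  have ePT := @pushK n w' g d b hb T sU1.
  have cPT : #|@pull n w' g d b T| = t by rewrite -cT -{2}ePT (@card_push n w' g d b hb).
  have cSPT : #|supp (@pull n w' g d b T)| = t.
    by rewrite -cST -[[set p.1 | p in T]]/(supp T) -[in RHS]ePT (@supp_push n w' g d b) (card_imset _ (@phi_inj n w' d b hb)).
  have /card_le1_eqP H := GQQ.1.2 _ cPT cSPT.
  rewrite -eb in p2Q *; apply: H; rewrite inE ?p1Q ?p2Q /=; apply/subsetP => p; rewrite !inE; apply: subsetP; by [apply: sT1 | apply: sT2].
- move=> y1 y2 y1K y2K ne.
  have [y1A b1C p1Q] := Kfacts y1 y1K; have [y2A b2C p2Q] := Kfacts y2 y2K.
  have [b1B s1 _] := blkP y1 y1A; have [b2B s2 _] := blkP y2 y2A.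
  have [eb | neb] := eqVneq (blk y1) (blk y2).
    set b := blk y1 in eb p1Q *.
    rewrite -eb in p2Q.
    have hb := hBC b b1C.
    have nep : @pull n w' g d b y1 != @pull n w' g d b y2.
      apply/negP => /eqP ep; move/negP: ne; apply; apply/eqP.
      by apply: pull_inj => //; rewrite -eb.
    apply: leq_trans (GQQ.2.1 _ _ p1Q p2Q nep) _.
    rewrite /hamming -(card_imset _ (@phi_inj n w' d b hb)).
    apply: subset_leq_card; apply/subsetP => u /imsetP [k].
    by rewrite !inE !word_pull => nk ->.
  have cI : #|blk y1 :&: blk y2| < t.
    rewrite ltnNge; apply/negP => /ex_subset [U [sU cU]].
    move/negP: neb; apply; apply/eqP; apply: (card1_uniq (GC.2 _ cU)) => //.
      by apply: subset_trans sU (subsetIl _ _).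
    by apply: subset_trans sU (subsetIr _ _).
  set S1 := supp y1; set S2 := supp y2.
  have cS1 : #|S1| = w by apply: AWsupp.
  have cS2 : #|S2| = w by apply: AWsupp.
  have cSI : #|S1 :&: S2| <= #|blk y1 :&: blk y2| by apply: subset_leq_card; apply: setISS.
  have cSI' : #|S2 :&: S1| <= #|blk y1 :&: blk y2| by rewrite setIC.
  have hD : #|(S1 :\: S2) :|: (S2 :\: S1)| = #|S1 :\: S2| + #|S2 :\: S1|.
    rewrite -cardsUI; suff -> : (S1 :\: S2) :&: (S2 :\: S1) = set0 by rewrite cards0 addn0.
    by apply/setP => u; rewrite !inE; case: (u \in S1); case: (u \in S2); rewrite ?andbF.
  have hsub : (S1 :\: S2) :|: (S2 :\: S1) \subset [set u | word y1 u != word y2 u].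
    apply/subsetP => u; rewrite !inE => /orP [] /andP [nu mu].
      have /eqP -> : word y2 u == None by rewrite wordN.
      by case E : (word y1 u) => //; move: mu; rewrite -(negbK (u \in _)) -wordN E.
    have /eqP -> : word y1 u == None by rewrite wordN.
    by case E : (word y2 u) => //; move: mu; rewrite -(negbK (u \in _)) -wordN E.
  have := subset_leq_card hsub; rewrite hD !cardsD cS1 cS2 /hamming.
  move=> h; apply: leq_trans h.
  move: cSI cSI' cI tw t0; generalize #|S1 :&: S2| #|S2 :&: S1| #|blk y1 :&: blk y2|.
  clear; move=> a b c; lia.
pose F (y : {set 'I_n * 'I_g}) := (blk y, @pull n w' g d (blk y) y).
have Finj : {in K &, injective F}.
  move=> y1 y2 y1K y2K [e1 e2].
  have [y1A _ _] := Kfacts y1 y1K; have [y2A _ _] := Kfacts y2 y2K.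
  by apply: pull_inj.
have FK : F @: K = setX C Q.
  apply/setP => [[b q]]; rewrite inE /=; apply/imsetP/andP => [[y yK [-> ->]] | [bC qQ]].
    by have [] := Kfacts y yK.
  have hb := hBC b bC.
  have bB := CsubB b bC.
  have qA : q \in all_words w w' g by rewrite -coverQ; apply/bigcupP; exists Q.
  move: qA; rewrite inE => /andP [/eqP cq mq].
  pose y := @push n w' g d b q.
  have yA : y \in AW.
    by rewrite inE (@card_push n w' g d b hb) cq eqxx (@mgo_push n w' g d b hb).
  have [_ _ uy] := blkP y yA.
  have eb : b = blk y := uy b bB (@supp_push_sub n w' g d b hb q).
  have py : @pull n w' g d (blk y) y = q by rewrite -eb (@pullK n w' g d b hb).
  exists y; last by rewrite /F py -eb.
  by apply: Kin => //; rewrite ?py // -eb.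
have cK : #|K| = #|C| * #|Q| by rewrite -cardsX -FK card_in_imset.
by rewrite cK -mulnA GQQ.2.2 mulnCA (steiner_count GC).
Qed.
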